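(* Let $\mathbb{F}$ be a field of characteristic not $2$. For every $\rho\in D$, the linear map $\phi_\rho:\hat{\mathcal{H}}\to\hat{\mathcal{H}}$ defined by $a_i\mapsto a_{i^\rho}$, $s_j\mapsto s_j$, $p_{\bar r,k}\mapsto \mathrm{sgn}(\rho)\,p_{\overline{r^\rho},k}$ is an automorphism of $\hat{\mathcal{H}}$, and the map $\rho\mapsto\phi_\rho$ is a faithful representation of $D$ as a group of automorphisms of $\hat{\mathcal{H}}$.
   Context: Notation: $\mathbb{N}=\{1,2,3,\dots\}$, $3\mathbb{N}=\{3,6,9,\dots\}$; for $r\in\mathbb{Z}$, $\bar r=r+3\mathbb{Z}\in\mathbb{Z}_3$. The algebra $\hat{\mathcal{H}}$ is the commutative $\mathbb{F}$-algebra with basis $\{a_i:i\in\mathbb{Z}\}\cup\{s_j:j\in\mathbb{N}\}\cup\{p_{\bar r,k}:\bar r\in\{\bar1,\bar2\},\ k\in 3\mathbb{N}\}$, where $s_0=0$, $p_{\bar r,j}=0$ for all $\bar r$ whenever $j\notin 3\mathbb{N}$, $p_{\bar 0,j}=-p_{\bar1,j}-p_{\bar2,j}$, $z_{\bar r,j}=p_{\bar r+\bar1,j}-p_{\bar r-\bar1,j}$, and for $i,i'\in\mathbb{Z}$, $j,l\in\mathbb{N}$, $h,k\in3\mathbb{N}$, $\bar r,\bar t\in\mathbb{Z}_3$: (H1) $a_ia_{i'}=\tfrac12(a_i+a_{i'})+s_{|i-i'|}+z_{\bar\imath,|i-i'|}$; (H2) $a_is_j=-\tfrac34a_i+\tfrac38(a_{i-j}+a_{i+j})+\tfrac32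 s_j-z_{\bar\imath,j}$; (H3) $a_ip_{\bar r,k}=\tfrac32p_{\bar r,k}-p_{-(\bar\imath+\bar r),k}$; (H4) $s_js_l=\tfrac34(s_j+s_l)-\tfrac38(s_{|j-l|}+s_{j+l})$; (H5) $s_jp_{\bar r,k}=\tfrac34(p_{\bar r,j}+p_{\bar r,k})-\tfrac38(p_{\bar r,|j-k|}+p_{\bar r,j+k})$; (H6) $p_{\bar r,h}p_{\bar t,k}=\tfrac14(z_{-(\bar r+\bar t),h}+z_{-(\bar r+\bar t),k})-\tfrac18(z_{-(\bar r+\bar t),|h-k|}+z_{-(\bar r+\bar t),h+k})$. For $k\in\tfrac12\mathbb{Z}$ let $\tau_k:\mathbb{Z}\to\mathbb{Z}$, $i\mapsto 2k-i$. Let $D=\langle\tau_0,\tau_{1/2}\rangle$ (the infinite dihedral group acting on $\mathbb{Z}$; its elements are the translations and the reflections $\tau_k$), and $\mathrm{sgn}:D\to\{\pm1\}$ with $\mathrm{sgn}(\rho)=-1$ for reflections and $1$ for translations. Write $i^\rho$ for the image of $i$ under $\rho$; for $\bar r\in\mathbb{Z}_3$ with representative $r$, $\overline{r^\rho}$ is well defined. *)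

(* Defs.v *)
From HB Require Import structures.
From mathcomp Require Import all_boot all_order all_algebra.
From mathcomp Require Import finmap.
From mathcomp.multinomials Require Import monalg.

Set Implicit Arguments.
Unset Strict Implicit.
Unset Printing Implicit Defensive.

Import Order.TTheory GRing.Theory Num.Theory.
Local Open Scope ring_scope.

(* Index set of the basis of \hat H:                                   *)
(*   inl i                 <-> a_i            (i : int)               *)
(*   inr (inl j)           <-> s_(j+1)        (j : nat, so s_1,s_2,..)*)
(*   inr (inr (false, m))  <-> p_(1bar, 3(m+1))                       *)
(*   inr (inr (true,  m))  <-> p_(2bar, 3(m+1))                       *)
Definition basis : Type := (int + (nat + (bool * nat)))%type.

Section Hhat.
Variable F : fieldType.

Definition Hhat := {malg F[basis]}.

Definition bvec (b : basis) : Hhat := << b >>.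

Definition a_ (i : int) : Hhat := bvec (inl i).

(* s_j for j : nat, with the convention s_0 = 0 *)
Definition s_ (j : nat) : Hhat :=
  if j is j'.+1 then bvec (inr (inl j')) else 0.

(* p_{rbar,k} for any representative r : int and any k : nat, with the
   conventions p_{rbar,k} = 0 unless k \in 3N, and
   p_{0bar,k} = - p_{1bar,k} - p_{2bar,k}. *)
Definition p_ (r : int) (k : nat) : Hhat :=
  if (0 < k)%N && (3 %| k)%N then
    let p1 := bvec (inr (inr (false, (k %/ 3).-1))) in
    let p2 := bvec (inr (inr (true, (k %/ 3).-1))) in
    if (r %% 3)%Z == 1 then p1
    else if (r %% 3)%Z == 2 then p2
    else - p1 - p2
  else 0.

Definition z_ (r : int) (j : nat) : Hhat := p_ (r + 1) j - p_ (r - 1) j.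

Definition prep (b : bool) : int := if b then 2 else 1.
Definition pk (m : nat) : nat := (3 * m.+1)%N.

Definition ndist (h k : nat) : nat := `|(h%:Z - k%:Z)|%N.

(* products of basis elements, (H1)-(H6) (and their commutative mirrors) *)
Definition mulB (x y : basis) : Hhat :=
  match x, y with
  | inl i, inl i' =>                                                (* H1 *)
      2^-1 *: (a_ i + a_ i') + s_ `|i - i'|%N + z_ i `|i - i'|%N
  | inl i, inr (inl j') | inr (inl j'), inl i =>                    (* H2 *)
      let j := j'.+1 in
      (- (3 / 4)) *: a_ i + (3 / 8) *: (a_ (i - j%:Z) + a_ (i + j%:Z))
      + (3 / 2) *: s_ j - z_ i j
  | inl i, inr (inr (b, m)) | inr (inr (b, m)), inl i =>            (* H3 *)
      (3 / 2) *: p_ (prep b) (pk m) - p_ (- (i + prep b)) (pk m)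
  | inr (inl j'), inr (inl l') =>                                   (* H4 *)
      let j := j'.+1 in let l := l'.+1 in
      (3 / 4) *: (s_ j + s_ l) - (3 / 8) *: (s_ (ndist j l) + s_ (j + l))
  | inr (inl j'), inr (inr (b, m)) | inr (inr (b, m)), inr (inl j') => (* H5 *)
      let j := j'.+1 in let k := pk m in let r := prep b in
      (3 / 4) *: (p_ r j + p_ r k)
      - (3 / 8) *: (p_ r (ndist j k) + p_ r (j + k))
  | inr (inr (b, m)), inr (inr (b', m')) =>                         (* H6 *)
      let h := pk m in let k := pk m' in
      let u := - (prep b + prep b') in
      (1 / 4) *: (z_ u h + z_ u k) - (1 / 8) *: (z_ u (ndist h k) + z_ u (h + k))
  end.

Definition hmul (x y : Hhat) : Hhat :=
  \sum_(b <- msupp x) \sum_(c <- msupp y) (x@_b * y@_c) *: mulB b c.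

End Hhat.

(* The infinite dihedral group D acting on Z: translations i |-> i + t *)
(* and reflections tau_k : i |-> 2k - i (k in Z/2), encoded by m = 2k. *)
Inductive dih : Type := Trans of int | Refl of int.

Definition dact (rho : dih) (i : int) : int :=
  match rho with Trans t => i + t | Refl m => m - i end.

Definition tau0 : dih := Refl 0.
Definition tau_half : dih := Refl 1.
Definition did : dih := Trans 0.

(* group law of D = composition of the maps of Z:
   dact (dcomp rho sigma) = dact rho \o dact sigma *)
Definition dcomp (rho sigma : dih) : dih :=
  match rho, sigma with
  | Trans t, Trans u => Trans (t + u)
  | Trans t, Refl n => Refl (n + t)
  | Refl m, Trans u => Refl (m - u)
  | Refl m, Refl n => Trans (m - n)
  end.

Definition dsgn (rho : dih) : int :=
  match rho with Trans _ => 1 | Refl _ => -1 end.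

Section Phi.
Variable F : fieldType.

Definition phiB (rho : dih) (b : basis) : Hhat F :=
  match b with
  | inl i => a_ F (dact rho i)
  | inr (inl j') => s_ F j'.+1
  | inr (inr (b, m)) => (dsgn rho)%:~R *: p_ F (dact rho (prep b)) (pk m)
  end.

Definition phi (rho : dih) (x : Hhat F) : Hhat F :=
  \sum_(b <- msupp x) x@_b *: phiB rho b.

End Phi.

(* Main.v *)
Require Import Defs.
From HB Require Import structures.
From mathcomp Require Import all_boot all_order all_algebra.
From mathcomp Require Import finmap.
From mathcomp.multinomials Require Import monalg.
From mathcomp Require Import zify ring.
Import GRing.Theory.
Local Open Scope ring_scope.


Section Main.
Context {F : fieldType}.
Local Notation H := (Hhat F).
Lemma mcD (x y : H) k : (x + y)@_k = x@_k + y@_k. Proof. exact: mcoeffD. Qed.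
Lemma mcN (x : H) k : (- x)@_k = - x@_k. Proof. exact: mcoeffN. Qed.
Lemma mcZ c (x : H) k : (c *: x)@_k = c * x@_k. Proof. exact: mcoeffZ. Qed.
Lemma mc0 k : (0 : H)@_k = 0. Proof. exact: mcoeff0. Qed.
Ltac mc :=
  repeat match goal with x := _ |- _ => clearbody x end;
  repeat match goal with
  | |- context[Defs.p_ F ?r ?k] => let t := fresh "t" in set t := Defs.p_ F r k; clearbody t
  | |- context[Defs.z_ F ?r ?k] => let t := fresh "t" in set t := Defs.z_ F r k; clearbody t
  | |- context[Defs.a_ F ?r] => let t := fresh "t" in set t := Defs.a_ F r; clearbody t
  | |- context[Defs.s_ F ?r] => let t := fresh "t" in set t := Defs.s_ F r; clearbody t
  | |- context[Defs.bvec F ?r] => let t := fresh "t" in set t := Defs.bvec F r; clearbody t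
  end;
  apply/malgP => ?; repeat (erewrite mcD || erewrite mcN || erewrite mcZ || erewrite mc0); ring.
Local Notation a_ := (a_ F).
Local Notation s_ := (s_ F).
Local Notation p_ := (p_ F).
Local Notation z_ := (z_ F).
Local Notation bvec := (bvec F).
Local Notation mulB := (mulB F).

Definition lext (f : basis -> H) (x : H) : H := \sum_(b <- msupp x) x@_b *: f b.
Definition islin (L : H -> H) := forall c x y, L (c *: x + y) = c *: L x + L y.

Lemma lextEw (f : basis -> H) (d : {fset basis}) (x : H) :
  (msupp x `<=` d)%fset -> lext f x = \sum_(b <- d) x@_b *: f b.
Proof.
move=> le; apply: big_fset_incl => // b _; rewrite -mcoeff_eq0 => /eqP ->.
by rewrite scale0r.
Qed.

Lemma lext_lin f : islin (lext f).
Proof.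
move=> c x y.
set d := (msupp x `|` msupp y `|` msupp (c *: x + y))%fset.
rewrite !(@lextEw f d); last 3 first.
- by apply/fsubsetP => b; rewrite !inE => ->; rewrite ?orbT.
- by apply/fsubsetP => b; rewrite !inE => ->; rewrite ?orbT.
- by apply/fsubsetP => b; rewrite !inE => ->; rewrite ?orbT.
rewrite scaler_sumr -big_split; apply: eq_bigr => b _.
by rewrite mcoeffD mcoeffZ scalerDl scalerA.
Qed.

Lemma lext_U f b : lext f (bvec b) = f b.
Proof.
by rewrite /lext /bvec msuppU oner_eq0 big_seq_fset1 mcoeffUU scale1r.
Qed.

Lemma eq_lext f g x : (forall b, f b = g b) -> lext f x = lext g x.
Proof. by move=> e; apply: eq_bigr => b _; rewrite e. Qed.

Section Lin.
Variable L : H -> H.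
Hypothesis HL : islin L.
Lemma lin0 : L 0 = 0.
Proof.
have h := HL 1 0 0; rewrite !scale1r addr0 in h.
by apply/(addrI (L 0)); rewrite addr0 -h.
Qed.
Lemma linD x y : L (x + y) = L x + L y.
Proof. by have := HL 1 x y; rewrite !scale1r. Qed.
Lemma linZ c x : L (c *: x) = c *: L x.
Proof. by have := HL c x 0; rewrite !addr0 lin0 addr0. Qed.
Lemma linN x : L (- x) = - L x.
Proof. by rewrite -scaleN1r linZ scaleN1r. Qed.
Lemma linB x y : L (x - y) = L x - L y.
Proof. by rewrite linD linN. Qed.
Lemma lin_lext f x : L (lext f x) = lext (fun b => L (f b)) x.
Proof.
rewrite /lext; elim: (msupp x : seq _) => [|b s IH]; first by rewrite !big_nil lin0.
by rewrite !big_cons HL IH.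
Qed.
End Lin.
Arguments lin0 {L}. Arguments linD {L}. Arguments linZ {L}. Arguments linN {L}. Arguments linB {L}. Arguments lin_lext {L}.

Lemma lext_fD f g c x : lext (fun b => c *: f b + g b) x = c *: lext f x + lext g x.
Proof.
rewrite /lext scaler_sumr -big_split; apply: eq_bigr => b _.
by rewrite scalerDr !scalerA mulrC.
Qed.

Lemma hmul_lext x y : hmul x y = lext (fun b => lext (mulB b) y) x.
Proof.
apply: eq_bigr => b _; rewrite scaler_sumr; apply: eq_bigr => c _.
by rewrite scalerA.
Qed.

Lemma hmul_linl w : islin (fun v => hmul v w).
Proof. by move=> c x y /=; rewrite !hmul_lext lext_lin. Qed.

Lemma hmul_linr w : islin (hmul w).
Proof.
move=> c x y; rewrite !hmul_lext -lext_fD; apply: eq_lext => b.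
by rewrite lext_lin.
Qed.

Lemma hmul_UU b c : hmul (bvec b) (bvec c) = mulB b c.
Proof. by rewrite hmul_lext !lext_U. Qed.

Lemma hmul_lextl f x w : hmul (lext f x) w = lext (fun b => hmul (f b) w) x.
Proof. by have := @lin_lext _ (hmul_linl w) f x. Qed.
Lemma hmul_lextr f x w : hmul w (lext f x) = lext (fun b => hmul w (f b)) x.
Proof. by have := @lin_lext _ (hmul_linr w) f x. Qed.

Lemma phiE rho x : phi rho x = lext (phiB F rho) x.
Proof. by []. Qed.

Lemma phi_lin rho : islin (@phi F rho).
Proof. by move=> c x y; rewrite !phiE lext_lin. Qed.


Lemma p_cong r r' k : (3 %| r - r')%Z -> p_ r k = p_ r' k.
Proof. by rewrite /p_ => h; have -> : (r %% 3 = r' %% 3)%Z by lia. Qed.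
Arguments p_cong {r r' k}.

Lemma p_zero r k : ~~ ((0 < k)%N && (3 %| k)%N) -> p_ r k = 0.
Proof. by rewrite /p_ => /negbTE ->. Qed.

Lemma p_sum r k : p_ r k + p_ (r + 1) k + p_ (r + 2) k = 0.
Proof.
rewrite /p_; case: ifP => _; last by rewrite !addr0.
have : ((r %% 3 = 0 /\ (r + 1) %% 3 = 1 /\ (r + 2) %% 3 = 2) \/
        (r %% 3 = 1 /\ (r + 1) %% 3 = 2 /\ (r + 2) %% 3 = 0) \/
        (r %% 3 = 2 /\ (r + 1) %% 3 = 0 /\ (r + 2) %% 3 = 1))%Z by lia.
have e01 : (0 == 1 :> int) = false by [].
have e02 : (0 == 2 :> int) = false by [].
have e21 : (2 == 1 :> int) = false by [].
set p1 := bvec _; set p2 := bvec _.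
case=> [[-> [-> ->]]|[[-> [-> ->]]|[-> [-> ->]]]]; rewrite !eqxx ?e01 ?e02 ?e21; mc.
Qed.

Lemma p_sum3 a b c k : (~ (3 %| a - b) /\ ~ (3 %| b - c) /\ ~ (3 %| a - c))%Z ->
  p_ a k + p_ b k + p_ c k = 0.
Proof.
move=> h.
have : ((3 %| b - (a + 1)) /\ (3 %| c - (a + 2)) \/ (3 %| b - (a + 2)) /\ (3 %| c - (a + 1)))%Z by lia.
case=> [[h1 h2]|[h1 h2]].
  by rewrite (p_cong h1) (p_cong h2) p_sum.
by rewrite (p_cong h1) (p_cong h2) -(p_sum a k); mc.
Qed.

Lemma z_cong u u' k : (3 %| u - u')%Z -> z_ u k = z_ u' k.
Proof.
move=> h; rewrite /z_ (@p_cong (u + 1) (u' + 1)) ?(@p_cong (u - 1) (u' - 1)) //; lia.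
Qed.

Lemma z_sum3 a b c k : (~ (3 %| a - b) /\ ~ (3 %| b - c) /\ ~ (3 %| a - c))%Z ->
  z_ a k + z_ b k + z_ c k = 0.
Proof.
move=> h; rewrite /z_.
transitivity ((p_ (a + 1) k + p_ (b + 1) k + p_ (c + 1) k) -
              (p_ (a - 1) k + p_ (b - 1) k + p_ (c - 1) k)); first by mc.
by rewrite !p_sum3 ?subrr //; lia.
Qed.

Lemma lin_p (L : H -> H) (HL : islin L) (R : int -> H) k :
  (forall r r', (3 %| r - r')%Z -> R r = R r') ->
  (forall r, R r + R (r + 1) + R (r + 2) = 0) ->
  L (p_ 1 k) = R 1 -> L (p_ 2 k) = R 2 -> forall r, L (p_ r k) = R r.
Proof.
move=> Rc Rs h1 h2 r.
have : (r %% 3 = 0 \/ r %% 3 = 1 \/ r %% 3 = 2)%Z by lia.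
case=> [h|[h|h]].
- rewrite (@p_cong r 0) ?(Rc r 0); try lia.
  have e : p_ 0 k = - (p_ 1 k + p_ 2 k).
    by apply/eqP; rewrite -addr_eq0 addrA (p_sum 0 k).
  have e' : R 0 = - (R 1 + R 2).
    by apply/eqP; rewrite -addr_eq0 addrA (Rs 0).
  by rewrite e e' (linN HL) (linD HL); erewrite h1; erewrite h2.
- by rewrite (@p_cong r 1) ?(Rc r 1) //; lia.
- by rewrite (@p_cong r 2) ?(Rc r 2) //; lia.
Qed.

Definition P1 m := bvec (inr (inr (false, m))).
Definition P2 m := bvec (inr (inr (true, m))).

Lemma pk_ok m : ((0 < pk m)%N && (3 %| pk m)%N) = true.
Proof. by rewrite /pk muln_gt0 /= dvdn_mulr. Qed.
Lemma pk_div m : ((pk m %/ 3).-1 = m)%N.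
Proof. by rewrite /pk mulKn. Qed.

Lemma p1E m : p_ 1 (pk m) = P1 m.
Proof. by rewrite /p_ pk_ok pk_div. Qed.
Lemma p2E m : p_ 2 (pk m) = P2 m.
Proof. by rewrite /p_ pk_ok pk_div. Qed.
Lemma pprepE b m : p_ (prep b) (pk m) = bvec (inr (inr (b, m))).
Proof. by case: b; [exact: p2E | exact: p1E]. Qed.

Lemma dsgnT t : ((dsgn (Trans t))%:~R : F) = 1. Proof. by []. Qed.
Lemma dsgnR m : ((dsgn (Refl m))%:~R : F) = -1. Proof. by []. Qed.

Lemma phi_a rho i : phi rho (a_ i) = a_ (dact rho i).
Proof. by rewrite phiE lext_U. Qed.
Lemma phi_s rho j : phi rho (s_ j) = s_ j.
Proof. by case: j => [|j]; [exact: (lin0 (phi_lin rho)) | rewrite phiE lext_U]. Qed.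

Lemma phi_p rho r k : phi rho (p_ r k) = (dsgn rho)%:~R *: p_ (dact rho r) k.
Proof.
case/boolP: ((0 < k)%N && (3 %| k)%N) => hk; last first.
  by rewrite !p_zero // scaler0 (lin0 (phi_lin rho)).
have -> : k = pk (k %/ 3).-1.
  rewrite /pk prednK; last by move: hk; rewrite divn_gt0 //; lia.
  by rewrite mulnC divnK //; case/andP: hk.
set m := (k %/ 3).-1.
move: r; apply: lin_p.
- exact: phi_lin.
- by move=> r r' h; rewrite (@p_cong _ (dact rho r')) //; case: rho => t /=; lia.
- move=> r; rewrite -!scalerDr p_sum3 ?scaler0 //; case: rho => t /=; lia.
- by rewrite p1E phiE lext_U.
- by rewrite p2E phiE lext_U.
Qed.

Lemma phi_z rho u k : phi rho (z_ u k) = z_ (dact rho u) k.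
Proof.
rewrite /z_ (linB (phi_lin rho)) !phi_p; case: rho => t /=.
  by rewrite !scale1r (@p_cong (u + 1 + t) (u + t + 1)) ?(@p_cong (u - 1 + t) (u + t - 1)) //; lia.
rewrite !scaleN1r opprK addrC (@p_cong (t - (u + 1)) (t - u - 1)) ?(@p_cong (t - (u - 1)) (t - u + 1)) //; lia.
Qed.

Lemma ndistC h k : ndist h k = ndist k h.
Proof. rewrite /ndist; lia. Qed.

Lemma mulB_comm b c : mulB b c = mulB c b.
Proof.
case: b => [i|[j|[b m]]]; case: c => [i'|[j'|[b' m']]]; cbn [Defs.mulB];
  try match goal with |- ?x = ?x => reflexivity end.
- have -> : `|(i' - i)%R|%N = `|(i - i')%R|%N by lia.
  set n := `|(i - i')%R|%N.
  have -> : z_ i' n = z_ i n.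
    case/boolP: ((0 < n)%N && (3 %| n)%N) => h.
      by apply: z_cong; move: h; rewrite /n; lia.
    by rewrite /z_ !p_zero.
  mc.
- rewrite (ndistC j'.+1) (addnC j'.+1); mc.
- rewrite (addrC (prep b')) (ndistC (pk m')) (addnC (pk m')); mc.
Qed.

Lemma hmul_comm (x y : H) : hmul x y = hmul y x.
Proof.
unfold hmul; rewrite exchange_big; apply: eq_bigr => c _; apply: eq_bigr => b _.
by rewrite mulrC mulB_comm.
Qed.
End Main.

Opaque fgadd fgopp fgzero fgscale Defs.p_ Defs.z_ Defs.a_ Defs.s_ Defs.bvec.
Section P4.
Context {F : fieldType}.
Local Notation H := (Hhat F).
Lemma cD (x y : H) k a b : x@_k = a -> y@_k = b -> (x + y)@_k = a + b.
Proof. by move=> <- <-; rewrite mcoeffD. Qed.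
Lemma cN (x : H) k a : x@_k = a -> (- x)@_k = - a.
Proof. by move=> <-; rewrite mcoeffN. Qed.
Lemma cZ c (x : H) k a : x@_k = a -> (c *: x)@_k = c * a.
Proof. by move=> <-; rewrite mcoeffZ. Qed.
Lemma c0 k : (0 : H)@_k = 0.
Proof. exact: mcoeff0. Qed.
Lemma mc_eq (x y : H) k a b : x@_k = a -> y@_k = b -> a = b -> x@_k = y@_k.
Proof. by move=> -> ->. Qed.
Ltac coef := match goal with
 | |- mcoeff _ (?x + ?y) = _ => eapply cD; [coef|coef]
 | |- mcoeff _ (- ?x) = _ => eapply cN; coef
 | |- mcoeff _ (?c *: ?x) = _ => eapply cZ; coef
 | |- mcoeff _ 0 = _ => eapply c0
 | |- _ => reflexivity
 end.
Ltac mc2 :=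
  cbv beta;
  repeat match goal with x := _ |- _ => clearbody x end;
  repeat match goal with
  | |- context[Defs.p_ F ?r ?k] => let t := fresh "t" in set t := Defs.p_ F r k; clearbody t
  | |- context[Defs.z_ F ?r ?k] => let t := fresh "t" in set t := Defs.z_ F r k; clearbody t
  | |- context[Defs.a_ F ?r] => let t := fresh "t" in set t := Defs.a_ F r; clearbody t
  | |- context[Defs.s_ F ?r] => let t := fresh "t" in set t := Defs.s_ F r; clearbody t
  | |- context[Defs.bvec F ?r] => let t := fresh "t" in set t := Defs.bvec F r; clearbody t
  end;
  apply/malgP => ?; eapply mc_eq; [coef | coef | ring].
Local Notation a_ := (a_ F).
Local Notation s_ := (s_ F).
Local Notation p_ := (p_ F).
Local Notation z_ := (z_ F).
Local Notation bvec := (bvec F).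
Local Notation mulB := (mulB F).

Lemma sE j : s_ j.+1 = bvec (inr (inl j)). Proof. by []. Qed.
Lemma aE i : a_ i = bvec (inl i). Proof. by []. Qed.

Lemma hmul_ap i r m : hmul (a_ i) (p_ r (pk m)) =
  (3 / 2) *: p_ r (pk m) - p_ (- (i + r)) (pk m).
Proof.
move: r; apply: lin_p.
- exact: hmul_linr.
- move=> r r' h; rewrite (@p_cong _ r r') ?(@p_cong _ (- (i + r)) (- (i + r'))) //; lia.
- move=> r.
  transitivity ((3 / 2) *: (p_ r (pk m) + p_ (r + 1) (pk m) + p_ (r + 2) (pk m)) -
     (p_ (- (i + r)) (pk m) + p_ (- (i + (r + 1))) (pk m) + p_ (- (i + (r + 2))) (pk m))).
    by mc2.
  rewrite p_sum p_sum3; first by rewrite scaler0 subr0.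
  lia.
- by rewrite [X in hmul _ X]p1E /P1 aE hmul_UU.
- by rewrite [X in hmul _ X]p2E /P2 aE hmul_UU.
Qed.

Lemma hmul_sp j r m : hmul (s_ j.+1) (p_ r (pk m)) =
  (3 / 4) *: (p_ r j.+1 + p_ r (pk m))
  - (3 / 8) *: (p_ r (ndist j.+1 (pk m)) + p_ r (j.+1 + pk m)).
Proof.
move: r; apply: lin_p.
- exact: hmul_linr.
- by move=> r r' h; rewrite !(@p_cong _ r r').
- move=> r.
  transitivity ((3 / 4) *: ((p_ r j.+1 + p_ (r + 1) j.+1 + p_ (r + 2) j.+1) +
                 (p_ r (pk m) + p_ (r + 1) (pk m) + p_ (r + 2) (pk m))) -
     (3 / 8) *: ((p_ r (ndist j.+1 (pk m)) + p_ (r + 1) (ndist j.+1 (pk m)) + p_ (r + 2) (ndist j.+1 (pk m))) +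
       (p_ r (j.+1 + pk m) + p_ (r + 1) (j.+1 + pk m) + p_ (r + 2) (j.+1 + pk m)))).
    by mc2.
  by rewrite !p_sum !addr0 !scaler0 subr0.
- by rewrite [X in hmul _ X]p1E /P1 sE hmul_UU.
- by rewrite [X in hmul _ X]p2E /P2 sE hmul_UU.
Qed.

Definition G6 (u : int) (h k : nat) : H :=
  (1 / 4) *: (z_ u h + z_ u k) - (1 / 8) *: (z_ u (ndist h k) + z_ u (h + k)).

Lemma G6_cong u u' h k : (3 %| u - u')%Z -> G6 u h k = G6 u' h k.
Proof. by move=> e; rewrite /G6 !(@z_cong _ u u'). Qed.

Lemma G6_sum3 a b c h k : (~ (3 %| a - b) /\ ~ (3 %| b - c) /\ ~ (3 %| a - c))%Z ->
  G6 a h k + G6 b h k + G6 c h k = 0.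
Proof.
move=> e; rewrite /G6.
transitivity ((1 / 4) *: ((z_ a h + z_ b h + z_ c h) + (z_ a k + z_ b k + z_ c k)) -
  (1 / 8) *: ((z_ a (ndist h k) + z_ b (ndist h k) + z_ c (ndist h k)) +
              (z_ a (h + k) + z_ b (h + k) + z_ c (h + k)))).
  by mc2.
by rewrite !z_sum3 // !addr0 !scaler0 subr0.
Qed.

Lemma hmul_pp r t m m' : hmul (p_ r (pk m)) (p_ t (pk m')) = G6 (- (r + t)) (pk m) (pk m').
Proof.
move: r; apply: (@lin_p _ (fun v => hmul v (p_ t (pk m'))) (hmul_linl _) (fun r => G6 (- (r + t)) (pk m) (pk m'))).
- by move=> r r' e; apply: G6_cong; lia.
- by move=> r; rewrite G6_sum3 //; lia.
- rewrite p1E /P1; move: t; apply: lin_p.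
  + exact: hmul_linr.
  + by move=> r r' e; apply: G6_cong; lia.
  + by move=> r; rewrite G6_sum3 //; lia.
  + by rewrite p1E /P1 hmul_UU.
  + by rewrite p2E /P2 hmul_UU.
- rewrite p2E /P2; move: t; apply: lin_p.
  + exact: hmul_linr.
  + by move=> r r' e; apply: G6_cong; lia.
  + by move=> r; rewrite G6_sum3 //; lia.
  + by rewrite p1E /P1 hmul_UU.
  + by rewrite p2E /P2 hmul_UU.
Qed.


Lemma hmulZl c (x y : H) : hmul (c *: x) y = c *: hmul x y.
Proof. by have := @linZ _ _ (hmul_linl y) c x. Qed.
Lemma hmulZr c (x y : H) : hmul y (c *: x) = c *: hmul y x.
Proof. by have := @linZ _ _ (hmul_linr y) c x. Qed.

Ltac pushphi rho := rewrite ?(@linD _ _ (phi_lin rho), @linN _ _ (phi_lin rho), @linZ _ _ (phi_lin rho), phi_a, phi_s, phi_z, phi_p).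

Lemma phi_aa rho i i' : phi rho (mulB (inl i) (inl i')) = hmul (phiB F rho (inl i)) (phiB F rho (inl i')).
Proof.
cbn [Defs.mulB Defs.phiB]; rewrite !aE hmul_UU -!aE; cbn [Defs.mulB]; pushphi rho.
have -> : `|(dact rho i - dact rho i')%R|%N = `|(i - i')%R|%N by case: rho => t /=; lia.
mc2.
Qed.

Lemma phi_as rho i j : phi rho (mulB (inl i) (inr (inl j))) =
  hmul (phiB F rho (inl i)) (phiB F rho (inr (inl j))).
Proof.
cbn [Defs.mulB Defs.phiB]; rewrite [X in hmul X _]aE [X in hmul _ X]sE hmul_UU; cbn [Defs.mulB]; pushphi rho.
case: rho => t; cbn [dact].
  have -> : i - j.+1%:Z + t = i + t - j.+1%:Z by ring.
  have -> : i + j.+1%:Z + t = i + t + j.+1%:Z by ring.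
  mc2.
have -> : t - (i - j.+1%:Z) = t - i + j.+1%:Z by ring.
have -> : t - (i + j.+1%:Z) = t - i - j.+1%:Z by ring.
mc2.
Qed.

Lemma phi_ap rho i b m : phi rho (mulB (inl i) (inr (inr (b, m)))) =
  hmul (phiB F rho (inl i)) (phiB F rho (inr (inr (b, m)))).
Proof.
cbn [Defs.mulB Defs.phiB]; rewrite hmulZr hmul_ap; pushphi rho.
rewrite (@p_cong _ (dact rho (- (i + prep b))) (- (dact rho i + dact rho (prep b)))); last first.
  by case: rho => t /=; lia.
mc2.
Qed.

Lemma phi_ss rho j l : phi rho (mulB (inr (inl j)) (inr (inl l))) =
  hmul (phiB F rho (inr (inl j))) (phiB F rho (inr (inl l))).
Proof.
cbn [Defs.mulB Defs.phiB]; rewrite !sE hmul_UU -!sE; cbn [Defs.mulB]; pushphi rho.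
mc2.
Qed.

Lemma phi_sp rho j b m : phi rho (mulB (inr (inl j)) (inr (inr (b, m)))) =
  hmul (phiB F rho (inr (inl j))) (phiB F rho (inr (inr (b, m)))).
Proof.
cbn [Defs.mulB Defs.phiB]; rewrite hmulZr hmul_sp; pushphi rho.
mc2.
Qed.

Lemma phi_pp rho b m b' m' : phi rho (mulB (inr (inr (b, m))) (inr (inr (b', m')))) =
  hmul (phiB F rho (inr (inr (b, m)))) (phiB F rho (inr (inr (b', m')))).
Proof.
cbn [Defs.mulB Defs.phiB]; rewrite hmulZr hmulZl hmul_pp /G6; pushphi rho.
rewrite !(@z_cong _ (dact rho (- (prep b + prep b'))) (- (dact rho (prep b) + dact rho (prep b')))); 
  try by case: rho => t /=; lia.
case: rho => t; rewrite ?dsgnT ?dsgnR; mc2.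
Qed.

Lemma phi_mulB rho b c : phi rho (mulB b c) = hmul (phiB F rho b) (phiB F rho c).
Proof.
case: b => [i|[j|[b m]]]; case: c => [i'|[j'|[b' m']]].
- exact: phi_aa.
- exact: phi_as.
- exact: phi_ap.
- by rewrite mulB_comm hmul_comm phi_as.
- exact: phi_ss.
- exact: phi_sp.
- by rewrite mulB_comm hmul_comm phi_ap.
- by rewrite mulB_comm hmul_comm phi_sp.
- exact: phi_pp.
Qed.


Lemma phi_mul rho (x y : H) : phi rho (hmul x y) = hmul (phi rho x) (phi rho y).
Proof.
have L1 : phi rho (hmul x y) = lext (fun b => lext (fun c => phi rho (mulB b c)) y) x.
  rewrite hmul_lext (@lin_lext _ _ (phi_lin rho)); apply: eq_lext => b.
  exact: (@lin_lext _ _ (phi_lin rho)).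
have R1 : hmul (phi rho x) (phi rho y) =
    lext (fun b => lext (fun c => hmul (phiB F rho b) (phiB F rho c)) y) x.
  rewrite [phi rho x]phiE hmul_lextl; apply: eq_lext => b.
  by rewrite phiE hmul_lextr.
rewrite L1 R1; apply: eq_lext => b; apply: eq_lext => c; exact: phi_mulB.
Qed.

Definition dinv (rho : dih) : dih :=
  match rho with Trans t => Trans (- t) | Refl m => Refl m end.

Lemma dcomp_invl rho : dcomp (dinv rho) rho = did.
Proof. by case: rho => t /=; rewrite ?addNr ?subrr. Qed.
Lemma dcomp_invr rho : dcomp rho (dinv rho) = did.
Proof. by case: rho => t /=; rewrite ?subrr. Qed.

Lemma dact_comp rho sigma i : dact (dcomp rho sigma) i = dact rho (dact sigma i).
Proof. case: rho => t; case: sigma => u /=; ring. Qed.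

Lemma phi_comp rho sigma (x : H) : phi (dcomp rho sigma) x = phi rho (phi sigma x).
Proof.
rewrite [phi sigma x]phiE (@lin_lext _ _ (phi_lin rho)) phiE; apply: eq_lext => b.
case: b => [i|[j|[b m]]]; cbn [Defs.phiB].
- by rewrite phi_a dact_comp.
- by rewrite phi_s.
- rewrite (@linZ _ _ (phi_lin rho)) phi_p dact_comp.
  by case: rho => t; case: sigma => u; cbn [dcomp]; rewrite ?dsgnT ?dsgnR; mc2.
Qed.

Lemma bvecE b : bvec b = << b >>. Proof. exact: erefl. Qed.

Lemma phi_id (x : H) : phi did x = x.
Proof.
rewrite phiE.
transitivity (lext bvec x).
  apply: eq_lext => b; case: b => [i|[j|[b m]]]; cbn [Defs.phiB dact did].
  - by rewrite addr0 aE.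
  - by rewrite sE.
  - by rewrite dsgnT scale1r addr0 pprepE.
rewrite {2}(monalgE x); apply: eq_bigr => k _.
apply/malgP => k'; rewrite mcoeffZ bvecE !mcoeffU.
by case: eqP => _; rewrite ?mulr1n ?mulr0n ?mulr1 ?mulr0.
Qed.

Lemma phi_bij rho : bijective (@phi F rho).
Proof.
exists (phi (dinv rho)) => x.
  by rewrite -phi_comp dcomp_invl phi_id.
by rewrite -phi_comp dcomp_invr phi_id.
Qed.

Lemma a_inj x y : a_ x = a_ y -> x = y.
Proof.
move/(congr1 (mcoeff (inl x))); rewrite !aE !bvecE !mcoeffU eqxx mulr1n.
case: eqP => [[->]|_] //; rewrite mulr0n => /eqP; rewrite oner_eq0; by case.
Qed.

Lemma phi_inj : injective (@phi F).
Proof.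
move=> r s E.
have h0 : phi r (a_ 0) = phi s (a_ 0) := congr1 (fun f => f (a_ 0)) E.
have h1 : phi r (a_ 1) = phi s (a_ 1) := congr1 (fun f => f (a_ 1)) E.
rewrite !phi_a in h0 h1; move/a_inj: h0; move/a_inj: h1; clear E.
case: r => t; case: s => u; cbn [dact] => e1 e0; try (f_equal; lia); exfalso; lia.
Qed.

End P4.

Theorem proposition3p5 (F : fieldType) (hF : (2 : F) != 0) :
  (* each phi_rho is an (algebra) automorphism of \hat H *)
  (forall rho : dih,
      (forall (c : F) (x y : Hhat F), @phi F rho (c *: x + y) = c *: @phi F rho x + @phi F rho y)
   /\ (forall x y : Hhat F, @phi F rho (hmul x y) = hmul (@phi F rho x) (@phi F rho y))
   /\ bijective (@phi F rho))
  (* rho |-> phi_rho is a group homomorphism from D ... *)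
  /\ (forall rho sigma : dih, @phi F (dcomp rho sigma) =1 @phi F rho \o @phi F sigma)
  /\ @phi F did =1 id
  (* ... which is faithful (injective) *)
  /\ injective (@phi F).
Proof.
split; first by move=> rho; split; [exact: phi_lin | split; [exact: phi_mul | exact: phi_bij]].
split; first by move=> rho sigma x; exact: phi_comp.
split; first by move=> x; exact: phi_id.
exact: phi_inj.
Qed.
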